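(* The maximal absolute projection constant in dimension $5$ satisfies $$\lambda(5)\ \ge\ \lambda(5,16)\ \ge\ \frac{5}{59}\left(11+6\sqrt5\right)\approx 2.06919.$$
   Context: For a real Banach space $X$ and finite-dimensional subspace $Y$, $\lambda(Y,X)=\inf\{\|P\|\}$ over bounded linear projections $P:X\to Y$ (i.e. $P|_Y=\mathrm{Id}_Y$). The absolute projection constant is $\lambda(Y)=\sup\{\lambda(Y,X): Y\subset X\}$ over all real Banach superspaces $X$, and $\lambda(m)=\sup\{\lambda(Y):\dim Y=m\}$. For integers $n\ge m$, $\lambda(m,n):=\sup\{\lambda(Y,\ell_\infty^{(n)}): Y\subset\ell_\infty^{(n)},\ \dim Y=m\}$, where $\ell_\infty^{(n)}$ is $\mathbb{R}^n$ with the max norm. *)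

(* Defs.v *)
From HB Require Import structures.
From mathcomp Require Import all_boot all_order all_algebra.
From mathcomp Require Import all_classical all_reals all_analysis.
Set Implicit Arguments. Unset Strict Implicit. Unset Printing Implicit Defensive.
Import Order.TTheory GRing.Theory Num.Theory.
Import numFieldNormedType.Exports.
Local Open Scope classical_set_scope.
Local Open Scope ring_scope.

Definition span_of {R : realType} {X : normedModType R} {m : nat}
  (v : 'I_m -> X) : set X :=
  [set x | exists c : 'I_m -> R, x = \sum_(i < m) c i *: v i].

Definition lin_indep {R : realType} {X : normedModType R} {m : nat}
  (v : 'I_m -> X) : Prop :=
  forall c : 'I_m -> R, \sum_(i < m) c i *: v i = 0 -> forall i, c i = 0.

Definition subspace_dim {R : realType} {X : normedModType R} (m : nat)
  (Y : set X) : Prop :=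
  exists v : 'I_m -> X, lin_indep v /\ Y = span_of v.

Definition opnorm {R : realType} {X : normedModType R} (P : X -> X) : \bar R :=
  ereal_sup [set (`|P x|)%:E | x in [set x : X | `|x| <= 1]].

Definition is_projection {R : realType} {X : normedModType R}
  (Y : set X) (P : {linear X -> X}) : Prop :=
  (forall x, Y (P x)) /\ (forall y, Y y -> P y = y).

(* Relative projection constant lambda(Y,X): infimum of ||P|| over linear
   projections onto Y (unbounded ones have norm +oo, so this is the infimum
   over bounded projections). *)
Definition rel_proj_const {R : realType} {X : normedModType R} (Y : set X)
  : \bar R :=
  ereal_inf [set opnorm (P : X -> X) | P in [set P : {linear X -> X} |
                                              is_projection Y P]].

Definition abs_proj_const_max (R : realType) (m : nat) : \bar R :=
  ereal_sup [set r | exists (X : completeNormedModType R) (Y : set X),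
                        subspace_dim m Y /\ r = rel_proj_const Y].

(* lambda(m,n): sup over m-dimensional subspaces of l_infty^(n), modelled as
   'rV[R]_n whose norm is the max norm of the entries. *)
Definition proj_const_mn (R : realType) (m n : nat) : \bar R :=
  ereal_sup [set r | exists Y : set 'rV[R]_n,
                        subspace_dim m Y /\ r = rel_proj_const Y].

(* Main.v *)
Require Import Defs.
From HB Require Import structures.
From mathcomp Require Import all_boot all_order all_algebra.
From mathcomp Require Import all_classical all_reals all_analysis.
From mathcomp Require Import ring lra.
Import Order.TTheory GRing.Theory Num.Theory.
Import numFieldNormedType.Exports.
Local Open Scope ring_scope.
Set Implicit Arguments. Unset Strict Implicit.

(* Y = { (u_i^T A u_i)_i : A traceless symmetric 3x3 } where u_i runs over the
   6 icosahedral and 10 dodecahedral axes; below a basis in "dual" form. *)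
Definition vtab (R : realType) (r : R) : seq (seq R) := [::
  [:: (1); (1); 0; 0; (-1); (-1); 0; 0; 0; 0; (1/3*r); (1/3*r); (1/3*r); (1/3*r); (-2/3*r); (-2/3*r)];
  [:: 0; 0; (1); (1); (-1); (-1); 0; 0; 0; 0; (2/3*r); (2/3*r); (-1/3*r); (-1/3*r); (-1/3*r); (-1/3*r)];
  [:: 0; 0; 0; (-3/5*r); (3/5*r); 0; (1); 0; 0; (-1); (-1); (-1); (1); 0; (1); 0];
  [:: 0; (3/5*r); 0; (-3/5*r); 0; 0; 0; (1); 0; (-1); (-1); 0; (1); (1); 0; (-1)];
  [:: 0; (3/5*r); 0; 0; 0; (-3/5*r); 0; 0; (1); (-1); 0; (1); (1); 0; (-1); (-1)]].
Definition sgtab : seq (seq bool) := [::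
  [:: true; false; false; false; false; false; true; false; false; true; true; false; true; true; false; false];
  [:: false; true; false; false; false; false; false; true; true; false; false; true; true; true; false; false];
  [:: false; false; true; false; false; false; true; true; false; false; true; true; false; false; true; false];
  [:: false; false; false; true; false; false; false; false; true; true; true; true; false; false; false; true];
  [:: false; false; false; false; true; false; true; false; true; false; false; false; true; false; true; true];
  [:: false; false; false; false; false; true; false; true; false; true; false; false; false; true; true; true];
  [:: true; false; true; false; true; false; true; false; false; false; true; false; true; false; true; false];
  [:: false; true; true; false; false; true; false; true; false; false; false; true; false; true; true; false];
  [:: false; true; false; true; true; false; false; false; true; false; false; true; true; false; false; true];
  [:: true; false; false; true; false; true; false; false; false; true; true; false; false; true; false; true];
  [:: true; false; true; true; false; false; true; false; false; true; true; true; false; false; false; false];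
  [:: false; true; true; true; false; false; false; true; true; false; true; true; false; false; false; false];
  [:: true; true; false; false; true; false; true; false; true; false; false; false; true; true; false; false];
  [:: true; true; false; false; false; true; false; true; false; true; false; false; true; true; false; false];
  [:: false; false; true; false; true; true; true; true; false; false; false; false; false; false; true; true];
  [:: false; false; false; true; true; true; false; false; true; true; false; false; false; false; true; true]].
Definition vt (R : realType) (r : R) (k j : nat) : R := nth 0 (nth [::] (vtab r) k) j.
Definition sg (R : realType) (i j : nat) : R := if nth false (nth [::] sgtab i) j then 1 else -1.
Definition wt (R : realType) (r : R) (i : nat) : R := if (i < 6)%N then 5 * (8 - r) else 35 + 3 * r.
Definition aidx (l : nat) : nat := nth 0%N [:: 0; 2; 6; 7; 8]%N l.

Lemma inv_entry (R : realType) (r : R) (H : r * r = 5) (k j : nat) : (k < 5)%N -> (j < 16)%N ->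
  \sum_(0 <= i < 16) wt r i * vt r k i * sg R i j = (110 + 60 * r) * vt r k j.
Proof.
move=> hk hj.
rewrite unlock /=.
do 5 (case: k hk => [_|k hk]; [ do 16 (case: j hj => [_|j hj]; [rewrite /vt /sg /wt /=; by field: H|]); by [] |]).
by [].
Qed.

Lemma coord_entry (R : realType) (r : R) (k l : nat) : (k < 5)%N -> (l < 5)%N ->
  vt r k (aidx l) = (k == l)%:R.
Proof.
move=> hk hl.
do 5 (case: k hk => [_|k hk]; [ do 5 (case: l hl => [_|l hl]; [by rewrite /vt /= |]); by [] |]).
by [].
Qed.

Lemma aidx_lt l : (l < 5)%N -> (aidx l < 16)%N.
Proof. by do 5 (case: l => [|l] //). Qed.

Lemma sg_abs (R : realType) i j : `|sg R i j| <= 1.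
Proof. by rewrite /sg; case: ifP => _; rewrite ?normrN normr1. Qed.

HB.instance Definition _ (R : realType) (m n : nat) :=
  Uniform_isComplete.Build 'M[R]_(m, n) (@mx_complete _ m n).

Definition r5 (R : realType) : R := Num.sqrt 5.
Definition vec (R : realType) (k : 'I_5) : 'rV[R]_16 := \row_(j < 16) vt (r5 R) k j.
Definition ai (l : 'I_5) : 'I_16 := Ordinal (aidx_lt (ltn_ord l)).
Definition xs (R : realType) (i : 'I_16) : 'rV[R]_16 := \row_(j < 16) sg R i j.
Definition Ysp (R : realType) : set 'rV[R]_16 := span_of (vec R).
Arguments vec : clear implicits.
Arguments xs : clear implicits.
Arguments Ysp : clear implicits.

Lemma r5H (R : realType) : r5 R * r5 R = 5.
Proof. by rewrite /r5 -expr2 sqr_sqrtr // ler0n. Qed.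

Lemma r5_ge0 (R : realType) : 0 <= r5 R.
Proof. exact: sqrtr_ge0. Qed.

Lemma vec_coord (R : realType) (k l : 'I_5) : vec R k 0 (ai l) = (k == l)%:R.
Proof. by rewrite mxE coord_entry. Qed.

Lemma sum_coord (R : realType) (c : 'I_5 -> R) l :
  (\sum_k c k *: vec R k) 0 (ai l) = c l.
Proof.
rewrite summxE.
under eq_bigr do rewrite mxE vec_coord.
rewrite (bigD1 l) //= eqxx mulr1 big1 ?addr0 // => k /negbTE ->.
by rewrite mulr0.
Qed.

Lemma span_repr (R : realType) (z : 'rV[R]_16) :
  Ysp R z -> z = \sum_k (z 0 (ai k)) *: vec R k.
Proof.
case=> c ->; apply: eq_bigr => k _; by rewrite sum_coord.
Qed.

Lemma indep (R : realType) : lin_indep (vec R).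
Proof. by move=> c H i; rewrite -(sum_coord c i) H mxE. Qed.

Lemma vec_in (R : realType) (k : 'I_5) : Ysp R (vec R k).
Proof.
exists (fun l => (l == k)%:R).
rewrite (bigD1 k) //= eqxx scale1r big1 ?addr0 // => l /negbTE ->.
by rewrite scale0r.
Qed.

Lemma inv_vec (R : realType) (k : 'I_5) :
  \sum_(i < 16) (wt (r5 R) i * vt (r5 R) k i) *: xs R i = (110 + 60 * r5 R) *: vec R k.
Proof.
apply/rowP => j; rewrite summxE !mxE.
under eq_bigr do rewrite !mxE.
rewrite -(big_mkord xpredT (fun i => wt (r5 R) i * vt (r5 R) k i * sg R i j)).
exact: (@inv_entry _ _ (r5H R) _ _ (ltn_ord k) (ltn_ord j)).
Qed.

Lemma entry_le (R : realType) (x : 'rV[R]_16) j : x 0 j <= `|x|.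
Proof.
apply: le_trans (ler_norm _) _.
have -> : `|x| = mx_norm x by [].
rewrite mx_normrE.
exact: (le_bigmax _ (fun ij : 'I_1 * 'I_16 => `|x ij.1 ij.2|) (0, j)).
Qed.

Lemma xs_norm (R : realType) i : `|xs R i| <= 1.
Proof.
have -> : `|xs R i| = mx_norm (xs R i) by [].
rewrite mx_normrE; apply/bigmax_leP; split => // ij _; rewrite mxE.
exact: sg_abs.
Qed.

Lemma wt_ge0 (R : realType) i : 0 <= wt (r5 R) i.
Proof.
have H := r5H R; have H0 := r5_ge0 R.
rewrite /wt; case: ifP => _; nra.
Qed.

Lemma sum_wt (R : realType) : \sum_(i < 16) wt (r5 R) i = 590.
Proof.
rewrite -(big_mkord xpredT (fun i => wt (r5 R) i)) unlock /= /wt /=.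
ring.
Qed.

Lemma proj_lb (R : realType) (P : {linear 'rV[R]_16 -> 'rV[R]_16}) :
  is_projection (Ysp R) P ->
  ((5 / 59 * (11 + 6 * Num.sqrt 5))%:E <= opnorm (P : 'rV[R]_16 -> 'rV[R]_16))%E.
Proof.
case=> HPY HPid.
have key : \sum_(i < 16) wt (r5 R) i * (P (xs R i)) 0 i = 5 * (110 + 60 * r5 R).
  transitivity (\sum_(i < 16) wt (r5 R) i *
                 \sum_(k < 5) (P (xs R i)) 0 (ai k) * vt (r5 R) k i).
    apply: eq_bigr => i _; congr (_ * _).
    rewrite {1}(span_repr (HPY (xs R i))) summxE; apply: eq_bigr => k _.
    by rewrite !mxE.
  transitivity (\sum_(k < 5) (P (\sum_(i < 16) (wt (r5 R) i * vt (r5 R) k i) *: xs R i)) 0 (ai k)).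
    under eq_bigr do rewrite big_distrr /=.
    rewrite exchange_big /=; apply: eq_bigr => k _.
    rewrite linear_sum summxE; apply: eq_bigr => i _.
    rewrite linearZ mxE /=; ring.
  under eq_bigr do rewrite inv_vec linearZ /=.
  under eq_bigr => k _ do rewrite (HPid _ (vec_in R k)).
  under eq_bigr do rewrite mxE vec_coord eqxx mulr1.
  rewrite sumr_const card_ord; ring.
have bnd i : (((P (xs R i)) 0 i)%:E <= opnorm (P : 'rV[R]_16 -> 'rV[R]_16))%E.
  apply: (@le_trans _ _ (`|P (xs R i)|)%:E).
    by rewrite lee_fin; exact: entry_le.
  apply: ereal_sup_ubound; exists (xs R i) => //; exact: xs_norm.
move: bnd; case E: (opnorm (P : 'rV[R]_16 -> 'rV[R]_16)) => [ob | | ] bnd.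
- rewrite lee_fin.
  have bo i : P (xs R i) 0 i <= ob by have := bnd i; rewrite lee_fin.
  have : \sum_(i < 16) wt (r5 R) i * (P (xs R i)) 0 i <= \sum_(i < 16) wt (r5 R) i * ob.
    by apply: ler_sum => i _; apply: ler_wpM2l; [exact: wt_ge0 | exact: bo].
  rewrite key -big_distrl /= sum_wt.
  rewrite -/(r5 R).
  move=> h; lra.
- by rewrite leey.
- by have := bnd ord0.
Qed.

Theorem theorem5 (R : realType) :
  (proj_const_mn R 5 16 <= abs_proj_const_max R 5)%E /\
  ((5 / 59 * (11 + 6 * Num.sqrt 5))%:E <= proj_const_mn R 5 16)%E.
Proof.
split.
  apply: ereal_sup_le => x [Y [HY ->]].
  by exists 'rV[R]_16, Y.
apply: (@le_trans _ _ (rel_proj_const (Ysp R))).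
  apply: le_ereal_inf_tmp => _ [P HP <-].
  exact: proj_lb.
apply: ereal_sup_ubound.
exists (Ysp R); split => //.
exists (vec R); split => //.
exact: indep.
Qed.
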